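(* Let $N\ge 3$ and $m\ge 1$ be integers, and let $\Gamma=\Gamma^1_{A_{N-3}}$ be the stable translation quiver of diagonals of a regular $N$-gon, with translation $\tau_1$. Consider its $m$-th power $(\Gamma^m,\tau_1^m)$. (1) The quiver $\Gamma^m$ contains the translation quiver of $m$-diagonals if and only if $N=nm+2$ for some positive integer $n$. More precisely: if $N$ is not of this form, the $N$-gon has no $m$-diagonals. If $N=nm+2$, the subquiver of $\Gamma^m$ formed by the $m$-diagonals and all arrows of $\Gamma^m$ between them coincides with $\Gamma^m_{A_{n-1}}$. (2) For every $n\ge 2$, $\Gamma^m_{A_{n-1}}$ (with translation $\tau_m=\tau_1^m$) is a connected component of $(\Gamma^1_{A_{nm-1}})^m$.
   Context: Let $\Pi$ be a regular $N$-gon with vertices labelled $1,\dots,N$ clockwise; labels are taken modulo $N$. A diagonal with endpoints $i,j$ is written $(i,j)=(j,i)$. The quiver $\Gamma^1_{A_{N-3}}$ has as vertices all diagonals of $\Pi$. There is an arrow $D\to D'$ exactly when $D,D'$ share an endpoint $i$, with other endpoints $j,j'$, such that $D$, $D'$ and the arc from $j$ to $j'$ not containing $i$ form a triangle, and $D$ is rotated onto $D'$ by a clockwise rotation about $i$; i.e. $(i,j)\to(i,j+1)$. The translation $\tau_1$ is the anticlockwise rotation about the centre through $2\pi/N$, i.e. $(i,j)\mapsto(i-1,j-1)$. For $m\ge 1$, an $m$-diagonal of an $(nm+2)$-gon is a diagonal dividing it into an $(mj+2)$-gon and an $(m(n-j)+2)$-gon for some $1\le j\le n-1$; more generally, an $m$-diagonal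 of the $N$-gon is a diagonal dividing it into two polygons whose numbers of sides are both congruent to $2$ modulo $m$. The quiver $\Gamma^m_{A_{n-1}}$ has as vertices the $m$-diagonals of the $(nm+2)$-gon, with an arrow $(i,j)\to(i,j+m)$ whenever both are $m$-diagonals. Equivalently, there is an arrow $D\to D'$ when they share an endpoint $i$, bound an $(m+2)$-gon together with the arc between their other endpoints not containing $i$, and $D$ rotates clockwise about $i$ onto $D'$. Its translation $\tau_m$ is the rotation $(i,j)\mapsto(i-m,j-m)$. For a stable translation quiver $(\Gamma,\tau)$, a path $x_0\to\cdots\to x_m$ is sectional if $\tau x_{i+1}\ne x_{i-1}$ for $i=1,\dots,m-1$. The quiver $\Gamma^m$ has the same vertices as $\Gamma$ and one arrow $x\to y$ for each sectional path of length $m$ from $x$ to $y$; $\tau^m$ is the $m$-fold composite of $\tau$. A connected component is a stable translation subquiver that is connected (not a disjoint union of two non-empty stable translation subquivers) and is a union of connected components of the underlying graph. *)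

(* Defs.v *)
From mathcomp Require Import all_boot.
Set Implicit Arguments. Unset Strict Implicit. Unset Printing Implicit Defensive.

(* Vertices of the regular N-gon are 'I_N = {0,...,N-1}, labelled clockwise
   (label k here stands for label k+1 of the paper); arithmetic mod N. *)

Lemma ord_pos N (i : 'I_N) : 0 < N.
Proof. exact: leq_ltn_trans (leq0n i) (ltn_ord i). Qed.

Definition shift N (i : 'I_N) (k : nat) : 'I_N :=
  Ordinal (ltn_pmod (i + k) (ord_pos i)).

Definition gap N (i j : 'I_N) : nat := (j + (N - i)) %% N.

Definition isdiag N (D : {set 'I_N}) : bool :=
  (#|D| == 2) &&
  [forall i in D, forall j in D,
     (i != j) ==> (2 <= gap i j) && (gap i j <= N - 2)].

(* m-diagonal: the diagonal {i,j} cuts the N-gon into the polygon with vertices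
   i, i+1, ..., j  (gap i j + 1 sides) and the one with vertices j, ..., i
   (N - gap i j + 1 sides); both numbers must be congruent to 2 mod m. *)
Definition mdiag N (m : nat) (D : {set 'I_N}) : bool :=
  isdiag D &&
  [forall i in D, forall j in D,
     (i != j) ==> ((gap i j).+1 == 2 %[mod m]) && ((N - gap i j).+1 == 2 %[mod m])].

Definition arrow1 N (D D' : {set 'I_N}) : bool :=
  isdiag D && isdiag D' &&
  [exists i, exists j, (D == [set i; j]) && (D' == [set i; shift j 1])].

(* translation tau_1 : (i,j) |-> (i-1,j-1) *)
Definition tau1 N (D : {set 'I_N}) : {set 'I_N} :=
  (fun i => shift i N.-1) @: D.

Definition arrowm N (m : nat) (D D' : {set 'I_N}) : bool :=
  mdiag m D && mdiag m D' &&
  [exists i, exists j, (D == [set i; j]) && (D' == [set i; shift j m])].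

(* translation tau_m : (i,j) |-> (i-m,j-m) *)
Definition taum N (m : nat) (D : {set 'I_N}) : {set 'I_N} :=
  (fun i => shift i (m * N.-1)) @: D.

Definition sectional N (p : seq {set 'I_N}) : bool :=
  [forall i : 'I_(size p).-1, arrow1 (nth set0 p i) (nth set0 p i.+1)] &&
  [forall i : 'I_(size p).-1,
     (0 < i) ==> (tau1 (nth set0 p i.+1) != nth set0 p i.-1)].

(* number of arrows x -> y in Gamma^m = number of sectional paths of length m
   from x to y *)
Definition npaths N (m : nat) (x y : {set 'I_N}) : nat :=
  #|[pred p : m.+1.-tuple {set 'I_N} |
       sectional p && (nth set0 p 0 == x) && (nth set0 p m == y)]|.

Definition taupow N (m : nat) (D : {set 'I_N}) : {set 'I_N} := iter m (@tau1 N) D.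

(* S is a connected component of the stable translation quiver (Gamma^m, tau_1^m):
   nonempty; a stable translation subquiver (stable under tau^m and tau^-m, with
   the mesh condition #arrows(y->x) = #arrows(tau x -> y)); a union of connected
   components of the underlying graph; and not a disjoint union of two nonempty
   stable translation subquivers. *)
Definition is_component N (m : nat) (S : pred {set 'I_N}) : Prop :=
  [/\ exists x, S x,
      forall x, S x = S (taupow m x),
      forall x y, S x -> S y -> npaths m y x = npaths m (taupow m x) y,
      forall x y, 0 < npaths m x y -> S x = S y
    & forall A B : {set {set 'I_N}},
        (forall x, S x = (x \in A) || (x \in B)) ->
        [disjoint A & B] ->
        (forall x, (x \in A) = (taupow m x \in A)) ->
        (forall x, (x \in B) = (taupow m x \in B)) ->
        (forall x y, x \in A -> y \in B -> npaths m x y = 0 /\ npaths m y x = 0) ->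
        A = set0 \/ B = set0].

(* Main.v *)
Require Import Defs.
From mathcomp Require Import all_boot zify.
Set Implicit Arguments. Unset Strict Implicit. Unset Printing Implicit Defensive.

Lemma shiftA N (i : 'I_N) a b : shift (shift i a) b = shift i (a + b).
Proof. apply: val_inj => /=. by rewrite modnDml addnA. Qed.

Lemma shift_mod N (i:'I_N) a : shift i (a %% N) = shift i a.
Proof. apply: val_inj => /=. by rewrite modnDmr. Qed.

Lemma shift0 N (i:'I_N) : shift i 0 = i.
Proof. apply: val_inj => /=. by rewrite addn0 modn_small. Qed.

Lemma shift_eqmod N (i:'I_N) a b : a = b %[mod N] -> shift i a = shift i b.
Proof. by move=> H; rewrite -shift_mod H shift_mod. Qed.

Lemma gap_shift N (i:'I_N) k : gap i (shift i k) = k %% N.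
Proof.
rewrite /gap /= modnDml.
have -> : i + k + (N - i) = k + N by have := ltn_ord i; lia.
by rewrite modnDr.
Qed.

Lemma shift_gap N (i j : 'I_N) : shift i (gap i j) = j.
Proof.
apply: val_inj; rewrite /= /gap modnDmr.
have -> : i + (j + (N - i)) = j + N by have := ltn_ord i; lia.
by rewrite modnDr modn_small.
Qed.

Lemma gap_lt N (i j : 'I_N) : gap i j < N.
Proof. exact: ltn_pmod (ord_pos i). Qed.

Lemma gapii N (i : 'I_N) : gap i i = 0.
Proof. by rewrite -{2}(shift0 i) gap_shift mod0n. Qed.

Lemma gap_eq0 N (i j:'I_N) : (gap i j == 0) = (i == j).
Proof.
apply/eqP/eqP => [H|->]; last exact: gapii.
by rewrite -(shift_gap i j) H shift0.
Qed.

Lemma gapC N (i j : 'I_N) : i != j -> gap j i = N - gap i j.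
Proof.
move=> nij; rewrite -{1}(shift_gap i j).
have g0 : 0 < gap i j by rewrite lt0n gap_eq0.
have glt := gap_lt i j.
have E : i = shift (shift i (gap i j)) (N - gap i j).
  rewrite shiftA -{1}(shift0 i); apply: shift_eqmod.
  by rewrite subnKC ?(ltnW glt) // modnn mod0n.
by rewrite [X in gap _ X]E gap_shift modn_small //; lia.
Qed.

Lemma shift_inj N c : injective (fun i : 'I_N => shift i c).
Proof.
move=> i j /(congr1 val) /= /eqP; rewrite eqn_modDr => /eqP.
by rewrite !modn_small // => /val_inj.
Qed.

Lemma gap_shift2 N (i j : 'I_N) c : gap (shift i c) (shift j c) = gap i j.
Proof.
rewrite -{1}(shift_gap i j) !shiftA.
have -> : shift i (gap i j + c) = shift (shift i c) (gap i j) by rewrite shiftA addnC.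
by rewrite gap_shift modn_small // gap_lt.
Qed.

Lemma set2_eq (T : finType) (a b c d : T) : a != b ->
  [set a; b] = [set c; d] -> (a = c /\ b = d) \/ (a = d /\ b = c).
Proof.
move=> nab E.
have ha : a \in [set c; d] by rewrite -E set21.
have hb : b \in [set c; d] by rewrite -E set22.
move: ha hb; rewrite !in_set2 => /orP[/eqP ac|/eqP ad] /orP[/eqP bc|/eqP bd].
- by move: nab; rewrite ac bc eqxx.
- by left.
- by right.
- by move: nab; rewrite ad bd eqxx.
Qed.

Lemma imset_set2 (T T' : finType) (f : T -> T') a b : f @: [set a; b] = [set f a; f b].
Proof. by rewrite imsetU1 imset_set1. Qed.

Lemma forall2 N (Q : nat -> bool) (i j : 'I_N) : i != j ->
  [forall x in [set i;j], forall y in [set i;j], (x != y) ==> Q (gap x y)]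
  = Q (gap i j) && Q (N - gap i j).
Proof.
move=> nij; apply/idP/idP.
- move=> /forall_inP H.
  have H1 := forall_inP (H i (set21 _ _)) j (set22 _ _).
  have H2 := forall_inP (H j (set22 _ _)) i (set21 _ _).
  rewrite nij /= in H1; rewrite eq_sym nij /= gapC // in H2.
  by rewrite H1 H2.
- move=> /andP[H1 H2]; apply/forall_inP => x; rewrite in_set2 => /orP[]/eqP->;
  apply/forall_inP => y; rewrite in_set2 => /orP[]/eqP->; rewrite ?eqxx //=.
  + by rewrite nij.
  + by rewrite eq_sym nij /= gapC.
Qed.

Lemma isdiag2 N (i j : 'I_N) : isdiag [set i;j] = (2 <= gap i j) && (gap i j <= N - 2).
Proof.
rewrite /isdiag cards2; case: (eqVneq i j) => [->|nij]; first by rewrite gapii.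
rewrite (@forall2 _ (fun g => (2 <= g) && (g <= N - 2))) //=; have := gap_lt i j.
case: (leqP 2 (gap i j)) => h1 //=; case: (leqP (gap i j) (N-2)) => h2 //= h3.
  apply/andP; split; lia.
Qed.

Definition Pm N m g := [&& 2 <= g, g <= N - 2, g.+1 == 2 %[mod m] & (N - g).+1 == 2 %[mod m]].

Lemma mdiag2 N m (i j : 'I_N) : mdiag m [set i;j] = Pm N m (gap i j).
Proof.
rewrite /mdiag isdiag2 /Pm; case: (eqVneq i j) => [->|nij]; first by rewrite gapii.
rewrite (@forall2 _ (fun g => (g.+1 == 2 %[mod m]) && ((N - g).+1 == 2 %[mod m]))) //=; have := gap_lt i j => h.
have -> : N - (N - gap i j) = gap i j by lia.
by case: (_ <= _); case: (_ <= _); case: (_ == _); case: (_ == _).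
Qed.

Lemma PmP N m g : 0 < m -> Pm N m g ->
  exists a b, [/\ 0 < a, 0 < b, g = a * m + 1 & N = (a + b) * m + 2].
Proof.
move=> m0 /and4P[h1 h2 h3 h4].
rewrite eqn_mod_dvd // in h3; rewrite eqn_mod_dvd in h4; last lia.
case/dvdnP: h3 => a ha; case/dvdnP: h4 => b hb.
exists a, b; split; nia.
all: lia.
Qed.

Lemma PmI N m a b : 0 < m -> 0 < a -> 0 < b -> N = (a + b) * m + 2 -> Pm N m (a * m + 1).
Proof.
move=> m0 a0 b0 ->; rewrite /Pm.
have -> : (a * m + 1).+1 = a * m + 2 by lia.
have -> : ((a + b) * m + 2 - (a * m + 1)).+1 = b * m + 2 by rewrite mulnDl; lia.
rewrite !modnMDl !eqxx !andbT; apply/andP; split; rewrite ?mulnDl; nia.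
Qed.

Lemma taupowE N m (D : {set 'I_N}) : taupow m D = (fun i => shift i (m * N.-1)) @: D.
Proof.
elim: m => [|m IH].
  by rewrite /taupow /= (eq_imset _ (fun i => shift0 i)) imset_id.
rewrite /taupow iterS -/(taupow m D) IH /tau1 -imset_comp.
apply: eq_imset => i /=; by rewrite shiftA mulSn addnC.
Qed.

Lemma tau1_2 N (a b : 'I_N) : tau1 [set a; b] = [set shift a N.-1; shift b N.-1].
Proof. by rewrite /tau1 imsetU1 imset_set1. Qed.

Lemma mdiag_shift N m c (x : {set 'I_N}) :
  mdiag m ((fun i => shift i c) @: x) = mdiag m x.
Proof.
case H: (#|x| == 2).
  case/cards2P: H => i [j [nij ->]].
  by rewrite imset_set2 !mdiag2 gap_shift2.
by rewrite /mdiag /isdiag card_imset ?H //; exact: shift_inj.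
Qed.

Lemma isdiag_neq N (i j : 'I_N) : isdiag [set i; j] -> i != j.
Proof. by rewrite /isdiag cards2; case: (i != j). Qed.

Lemma ray N (x : nat -> {set 'I_N}) K :
  (forall t, t < K.+1 -> arrow1 (x t) (x t.+1)) ->
  (forall t, 0 < t -> t < K.+1 -> tau1 (x t.+1) != x t.-1) ->
  exists i j, forall t, t <= K.+1 -> x t = [set i; shift j t].
Proof.
elim: K => [|K IH] H1 H2.
  case/andP: (H1 0 isT) => _ /existsP[i /existsP[j /andP[/eqP e0 /eqP e1]]].
  exists i, j => t; case: t => [|[|t]] // _; by rewrite ?shift0.
case: IH => [t ht|t ht ht'|i [j Hij]]; [apply: H1; lia | apply: H2; lia |].
exists i, j => t; rewrite leq_eqVlt => /orP[/eqP ->|ht]; last by apply: Hij.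
case/andP: (H1 K.+1 (leqnn _)) => /andP[dK _] /existsP[a /existsP[b /andP[/eqP e0 /eqP e1]]].
rewrite e1; rewrite Hij // in e0 dK.
case: (set2_eq (isdiag_neq dK) e0) => [[<- <-]|[ea eb]]; first by rewrite shiftA addn1.
exfalso; move: (H2 K.+1 isT (leqnn _)); rewrite e1 tau1_2 /= Hij; last lia.
rewrite -ea -eb !shiftA setUC.
have N0 : 0 < N by exact: ord_pos i.
have -> : shift i (1 + N.-1) = i.
  rewrite -{2}(shift0 i); apply: shift_eqmod; rewrite add1n prednK // modnn mod0n //.
have -> : shift j (K.+1 + N.-1) = shift j K.
  apply: shift_eqmod; rewrite addSn -addnS prednK // modnDr //.
by rewrite eqxx.
Qed.

Lemma tuple_ray N m (p : m.+1.-tuple {set 'I_N}) : 0 < m -> sectional p ->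
  (exists i j, forall t, t <= m -> nth set0 p t = [set i; shift j t]) /\
  (forall t, t <= m -> isdiag (nth set0 p t)).
Proof.
move=> m0 /andP[H1 H2].
have H1' : forall t, t < m -> arrow1 (nth set0 p t) (nth set0 p t.+1).
  move=> t ht; have ht' : t < (size p).-1 by rewrite size_tuple.
  exact: (forallP H1 (Ordinal ht')).
have H2' : forall t, 0 < t -> t < m -> tau1 (nth set0 p t.+1) != nth set0 p t.-1.
  move=> t t0 ht; have ht' : t < (size p).-1 by rewrite size_tuple.
  exact: (implyP (forallP H2 (Ordinal ht')) t0).
split.
  destruct m as [|K]; first done.
  exact: (@ray N (fun t => nth set0 p t) K H1' H2').
move=> t; rewrite leq_eqVlt => /orP[/eqP->|ht].
  destruct m as [|K]; first done.
  by case/andP: (H1' K (leqnn _)) => /andP[].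
by case/andP: (H1' t ht) => /andP[].
Qed.

Definition Ppath N m (x y : {set 'I_N}) :=
  [pred p : m.+1.-tuple {set 'I_N} |
       sectional p && (nth set0 p 0 == x) && (nth set0 p m == y)].

Lemma npaths_uniq N m (x y : {set 'I_N}) p q : 0 < m -> m < N ->
  Ppath m x y p -> Ppath m x y q -> p = q.
Proof.
move=> m0 mN /andP[/andP[sp /eqP px] /eqP py] /andP[/andP[sq /eqP qx] /eqP qy].
case: (tuple_ray m0 sp) => [[i [j Hp]] Dp].
case: (tuple_ray m0 sq) => [[i' [j' Hq]] Dq].
have ex := Hp 0 isT; have ex' := Hq 0 isT.
rewrite px shift0 in ex; rewrite qx shift0 in ex'.
have nij : i != j by apply: isdiag_neq; rewrite -ex -px; exact: Dp.
case: (set2_eq nij (etrans (esym ex) ex')) => [[e1 e2]|[e1 e2]].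
  apply: val_inj; apply: (@eq_from_nth _ set0); first by rewrite !size_tuple.
  move=> t; rewrite size_tuple ltnS => ht.
  by rewrite Hp // Hq // e1 e2.
exfalso.
have ey := Hp m (leqnn _); have ey' := Hq m (leqnn _).
rewrite py in ey; rewrite qy in ey'.
have nij2 : i != shift j m by apply: isdiag_neq; rewrite -ey -py; exact: Dp.
case: (set2_eq nij2 (etrans (esym ey) ey')) => [[f1 f2]|[f1 f2]].
  by move: nij; rewrite f1 e2 eqxx.
have : gap i (shift j' m) = 0 by rewrite -f1 gapii.
rewrite -e1.
by rewrite gap_shift modn_small //; lia.
Qed.

Lemma npathsE N m (x y : {set 'I_N}) : 0 < m -> m < N ->
  npaths m x y = [exists p, Ppath m x y p].
Proof.
move=> m0 mN; rewrite /npaths.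
case: (pickP (Ppath m x y)) => [p0 Hp0|H0].
  have -> : [exists p, Ppath m x y p] by apply/existsP; exists p0.
  rewrite (@eq_card _ _ (pred1 p0)) ?card1 // => q.
  rewrite inE /=; apply/idP/eqP => [Hq|->]; last exact: Hp0.
  exact: (npaths_uniq m0 mN Hq Hp0).
have -> : [exists p, Ppath m x y p] = false.
  by apply/existsP => -[p]; rewrite H0.
by rewrite eq_card0.
Qed.

Lemma shift_gapA N (i j : 'I_N) t : shift j t = shift i (gap i j + t).
Proof. by rewrite -shiftA shift_gap. Qed.

Lemma gap_along N (i j : 'I_N) m :
  (forall t, t <= m -> isdiag [set i; shift j t]) ->
  forall t, t <= m -> gap i (shift j t) = gap i j + t /\ gap i j + t <= N - 2.
Proof.
move=> H; elim=> [|t IH] ht.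
  by rewrite shift0 addn0; split => //; have := H 0 isT; rewrite shift0 isdiag2 => /andP[].
have [_ h] := IH (ltnW ht).
have := H 0 isT; rewrite shift0 isdiag2 => /andP[g2 _].
have e : gap i (shift j t.+1) = gap i j + t.+1.
  by rewrite (shift_gapA i) gap_shift modn_small //; lia.
split => //; have := H _ ht; by rewrite isdiag2 e => /andP[_ ->].
Qed.

Lemma mdiag_ex N m (x : {set 'I_N}) : mdiag m x -> exists i j, x = [set i; j].
Proof.
case/andP => /andP[/cards2P[i [j [_ ->]]] _] _; by exists i, j.
Qed.

Lemma mdiag_mN N m (x : {set 'I_N}) : 0 < m -> mdiag m x -> m < N.
Proof.
move=> m0 H; case: (mdiag_ex H) => i [j e]; rewrite e mdiag2 in H.
case: (PmP m0 H) => a [b [a0 b0 _ ->]]; nia.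
Qed.

Definition raytuple N m (i j : 'I_N) : m.+1.-tuple {set 'I_N} :=
  @Tuple m.+1 _ (mkseq (fun t => [set i; shift j t]) m.+1) (introT eqP (size_mkseq _ _)).

Lemma arrowm_path N m (x y : {set 'I_N}) : 0 < m -> mdiag m x -> mdiag m y ->
  arrowm m x y = [exists p, Ppath m x y p].
Proof.
move=> m0 dx dy; rewrite /arrowm dx dy /=.
apply/existsP/existsP.
- case=> i /existsP[j /andP[/eqP ex /eqP ey]].
  have hx := dx; have hy := dy.
  rewrite ex mdiag2 in hx; rewrite ey mdiag2 in hy.
  case: (PmP m0 hx) => a [b [a0 b0 eg eN]].
  have gm : gap i j + m < N by nia.
  have gm2 : gap i j + m <= N - 2.
    by move: hy; rewrite (shift_gapA i) gap_shift modn_small // => /and4P[].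
  have gd : forall t, t <= m -> isdiag [set i; shift j t].
    move=> t ht; rewrite isdiag2 (shift_gapA i) gap_shift modn_small; last lia.
    move: hx => /and4P[h1 _ _ _]; apply/andP; split; lia.
  have nth_r : forall t, t <= m -> nth set0 (raytuple m i j) t = [set i; shift j t].
    by move=> t ht; rewrite /= nth_mkseq.
  exists (raytuple m i j); rewrite /Ppath /= !nth_r // ex ey shift0 !eqxx !andbT.
  apply/andP; split.
  + apply/forallP => -[t ht]; have ht' : t < m by move: (ht); rewrite size_tuple.
    rewrite (nth_r t) ?(ltnW ht') // (nth_r t.+1) //.
    rewrite /arrow1 (gd t) ?(ltnW ht') // (gd t.+1) //.
    by apply/existsP; exists i; apply/existsP; exists (shift j t); rewrite shiftA addn1 !eqxx.
  + apply/forallP => -[t ht]; have ht' : t < m by move: (ht); rewrite size_tuple.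
    apply/implyP; rewrite [X in X -> _]/= => t0.
    rewrite (nth_r t.+1) // (nth_r t.-1); last by lia.
    rewrite tau1_2; apply/eqP => E.
    have : i \in [set shift i N.-1; shift (shift j t.+1) N.-1] by rewrite E set21.
    rewrite in_set2 => /orP[/eqP e1|/eqP e1].
    * have : gap i (shift i N.-1) = 0 by rewrite -e1 gapii.
      rewrite gap_shift modn_small; lia.
    * have : shift (shift j t.+1) N.-1 = shift j t.
        rewrite shiftA; apply: shift_eqmod.
        have N0 : 0 < N by lia.
        by rewrite addSn -addnS prednK // modnDr.
      move=> e2; rewrite e2 in e1.
      have := gd t (ltnW ht'); rewrite -e1 => /isdiag_neq; by rewrite eqxx.
- case=> p /andP[/andP[sp /eqP px] /eqP py].
  case: (tuple_ray m0 sp) => [[i [j Hp]] _].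
  exists i; apply/existsP; exists j.
  by rewrite -px -py Hp // Hp // shift0 !eqxx.
Qed.

Lemma npaths_eq N m (x y : {set 'I_N}) : 0 < m -> mdiag m x -> mdiag m y ->
  npaths m x y = arrowm m x y.
Proof.
move=> m0 dx dy; rewrite (arrowm_path m0 dx dy) npathsE //.
exact: mdiag_mN dx.
Qed.

Lemma shift_cm1 N m (a : 'I_N) : shift (shift a (m * N.-1)) m = a.
Proof.
have N0 := ord_pos a.
rewrite shiftA -mulnSr prednK // -{2}(shift0 a); apply: shift_eqmod.
by rewrite modnMl mod0n.
Qed.

Lemma shift_cm2 N m (a : 'I_N) : shift (shift a m) (m * N.-1) = a.
Proof. by rewrite shiftA addnC -shiftA shift_cm1. Qed.

Lemma Pm_shift N m g : 2 <= g -> g + m <= N - 2 -> Pm N m (g + m) = Pm N m g.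
Proof.
move=> h1 h2; rewrite /Pm.
have h3 : 2 <= g + m by lia.
have h4 : g <= N - 2 by lia.
rewrite h1 h2 h3 h4 /=.
have -> : (g + m).+1 = g.+1 + m by lia.
have -> : (N - g).+1 = (N - (g + m)).+1 + m by lia.
by rewrite !modnDr.
Qed.

Lemma part1a N m : 3 <= N -> 1 <= m ->
  (~ exists n, 0 < n /\ N = n * m + 2) -> forall D : {set 'I_N}, ~~ mdiag m D.
Proof.
move=> N3 m0 Hn D; apply/negP => H; apply: Hn.
case: (mdiag_ex H) => i [j e]; rewrite e mdiag2 in H.
case: (PmP m0 H) => a [b [a0 b0 _ eN]].
exists (a + b); split => //; lia.
Qed.

Lemma part1b N m n : 3 <= N -> 1 <= m -> 0 < n -> N = n * m + 2 ->
  forall D D' : {set 'I_N}, mdiag m D -> mdiag m D' ->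
    npaths m D D' = nat_of_bool (arrowm m D D') /\ taupow m D = taum m D.
Proof.
move=> _ m0 _ _ D D' d1 d2; split; first exact: npaths_eq.
by rewrite taupowE.
Qed.

Lemma part2 n m : 2 <= n -> 1 <= m ->
  is_component m (fun D : {set 'I_(n * m + 2)} => mdiag m D).
Proof.
move=> n2 m0.
set N := n * m + 2.
have N0 : 0 < N by rewrite /N addn2.
have mN : m < N by rewrite /N; nia.
set v0 : 'I_N := Ordinal N0.
set c := m * N.-1.
set X := fun (i : 'I_N) a => [set i; shift i (a * m + 1)].
have Xd : forall i a, 0 < a -> a < n -> mdiag m (X i a).
  move=> i a a0 an; rewrite /X mdiag2 gap_shift modn_small; last by rewrite /N; nia.
  apply: (PmI (b := n - a)) => //; first lia.
  by rewrite subnKC // ltnW.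
have mdiag_tau : forall x : {set 'I_N}, mdiag m (taupow m x) = mdiag m x.
  by move=> x; rewrite taupowE mdiag_shift.
split.
- exists (X v0 1); exact: Xd.
- by move=> x; rewrite /= mdiag_tau.
- move=> x y /= dx dy.
  have dtx : mdiag m (taupow m x) by rewrite mdiag_tau.
  rewrite (npaths_eq m0 dy dx) (npaths_eq m0 dtx dy); congr nat_of_bool.
  rewrite /arrowm dy dx dtx /=.
  apply/existsP/existsP.
  + case=> i /existsP[j /andP[/eqP ey /eqP ex]].
    exists j; apply/existsP; exists (shift i c).
    rewrite taupowE ex imset_set2 shift_cm2 shift_cm1 ey.
    by rewrite [[set shift i _; j]]setUC [[set j; i]]setUC !eqxx.
  + case=> a /existsP[b /andP[/eqP et /eqP ey]].
    have ex : (fun i => shift i m) @: taupow m x = x.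
      rewrite taupowE -imset_comp (eq_imset _ (fun i => shift_cm1 m i)).
      exact: imset_id.
    rewrite et imset_set2 in ex.
    exists (shift b m); apply/existsP; exists a.
    by rewrite ey -ex [[set a; _]]setUC [[set shift a m; _]]setUC !eqxx.
- move=> x y /card_gt0P[p Hp].
  have := Hp; rewrite -topredE /= => /andP[/andP[sp /eqP px] /eqP py].
  case: (tuple_ray m0 sp) => [[i [j Hpr]] Dp].
  have ex : x = [set i; j] by rewrite -px Hpr // shift0.
  have ey : y = [set i; shift j m] by rewrite -py Hpr.
  have H : forall t, t <= m -> isdiag [set i; shift j t].
    by move=> t ht; rewrite -Hpr //; apply: Dp.
  have [e1 e2] := gap_along H (leqnn m).
  have g2 : 2 <= gap i j.
    by have := H 0 isT; rewrite shift0 isdiag2 => /andP[].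
  by rewrite /= ex ey !mdiag2 e1 Pm_shift.
- move=> A B HS Hdis HA HB Hnp.
  case: (set_0Vmem A) => [->|[a0 Ha0]]; [by left | right].
  have F1 : forall x y, mdiag m x -> mdiag m y -> arrowm m x y -> (x \in A) = (y \in A).
    move=> x y dx dy axy; have np : npaths m x y = 1 by rewrite npaths_eq // axy.
    apply/idP/idP => Hin.
    + have := HS y; rewrite /= dy => /esym/orP[//|Hy].
      by have := (Hnp x y Hin Hy).1; rewrite np.
    + have := HS x; rewrite /= dx => /esym/orP[//|Hx].
      by have := (Hnp y x Hin Hx).2; rewrite np.
  have Xa : forall i a, 0 < a -> a < n -> (X i a \in A) = (X i 1 \in A).
    move=> i; elim=> // a IH _ an.
    case: (posnP a) => [->//|a0'].
    rewrite -IH //; last lia.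
    symmetry; apply: F1; [apply: Xd => //; lia | exact: Xd |].
    rewrite /arrowm !Xd //; last lia.
    apply/existsP; exists i; apply/existsP; exists (shift i (a * m + 1)).
    rewrite /X shiftA !eqxx /=.
    have -> : a * m + 1 + m = a.+1 * m + 1 by rewrite mulSn; lia.
    by rewrite eqxx.
  have Xstep : forall i, (X i 1 \in A) = (X (shift i 1) 1 \in A).
    move=> i.
    have e1 : taupow m (X i 1) = X (shift i c) 1.
      by rewrite taupowE /X imset_set2 shiftA [1 * m + 1 + c]addnC -shiftA.
    have e2' : shift (shift (shift i c) (m + 1)) ((n - 1) * m + 1) = shift i c.
      rewrite !shiftA -{2}(shift0 i) shiftA; apply: shift_eqmod.
      have -> : c + (m + 1 + ((n - 1) * m + 1)) = (0 + c) + N.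
        by rewrite /N mulnBl mul1n; nia.
      by rewrite modnDr.
    have e2 : X (shift i c) 1 = X (shift (shift i c) (m + 1)) (n - 1).
      by rewrite /X e2' setUC mul1n.
    have e3 : shift (shift i c) (m + 1) = shift i 1.
      rewrite shiftA addnA -mulnSr prednK //; apply: shift_eqmod.
      by rewrite modnMDl.
    rewrite HA e1 e2 Xa; [by rewrite e3 | lia | lia].
  have Xall : forall k, (X (shift v0 k) 1 \in A) = (X v0 1 \in A).
    elim=> [|k IH]; first by rewrite shift0.
    by rewrite -IH (Xstep (shift v0 k)) shiftA addn1.
  have all : forall x, mdiag m x -> x \in A.
    have hv0 : X v0 1 \in A.
      have da0 : mdiag m a0 by rewrite (HS a0) Ha0.
      case: (mdiag_ex da0) => i [j e].
      have := da0; rewrite e mdiag2 => hP.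
      case: (PmP m0 hP) => a [b [a1 b1 eg eN]].
      have an : a < n by move: eN; rewrite /N => eN; nia.
      have eX : X i a = a0 by rewrite e /X -eg shift_gap.
      rewrite -eX Xa // in Ha0.
      have ei : i = shift v0 i.
        by apply: val_inj; rewrite /= add0n modn_small.
      by move: Ha0; rewrite {1}ei Xall.
    move=> x dx; case: (mdiag_ex dx) => i [j e].
    have hP := dx; rewrite e mdiag2 in hP.
    case: (PmP m0 hP) => a [b [a1 b1 eg eN]].
    have an : a < n by move: eN; rewrite /N => eN; nia.
    have <- : X i a = x by rewrite e /X -eg shift_gap.
    have ei : i = shift v0 i by apply: val_inj; rewrite /= add0n modn_small.
    by rewrite Xa // ei Xall.
  apply/setP => b; rewrite in_set0; apply/negbTE/negP => Hb.
  have db : mdiag m b by rewrite (HS b) Hb orbT.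
  by have := disjointFr Hdis (all b db); rewrite Hb.
Qed.

Theorem proposition7p1 :
  (forall N m : nat, 3 <= N -> 1 <= m ->
     ((~ exists n, 0 < n /\ N = n * m + 2) ->
        forall D : {set 'I_N}, ~~ mdiag m D)
     /\
     (forall n, 0 < n -> N = n * m + 2 ->
        forall D D' : {set 'I_N}, mdiag m D -> mdiag m D' ->
          npaths m D D' = nat_of_bool (arrowm m D D')
          /\ taupow m D = taum m D))
  /\
  (forall n m : nat, 2 <= n -> 1 <= m ->
     is_component m (fun D : {set 'I_(n * m + 2)} => mdiag m D)).
Proof.
split; last exact: part2.
move=> N m N3 m1; split; first exact: part1a.
move=> n n0 eN; exact: part1b N3 m1 n0 eN.
Qed.
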